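(* Let $P\in\mathfrak N_2$ and let $(k,U,s,t)$ be a retractive up-split of $P$ with $S=s[P(0\to k)\setminus U]$ and $T=t[P(k+1\to h_P)]$. There exists a retraction $r$ of $P$ whose image is the induced subposet $S\cup T$, forming the ordinal sum $S\oplus T$, with $r(x)=s(x)$ for $x\in P(0\to k)\setminus U$, $r(x)\in T$ for $x\in U$, and $r(x)=t(x)$ for $x\in P(k+1\to h_P)$, if and only if $$S(h_S) < T(0) \quad\text{and}\quad \forall\, u\in U\ \exists\, v\in T(0):\ u\not< p\text{ for all }p\in t^{-1}(v).$$
   Context: All posets are finite. For a poset $P$ let $h_P$ be its height. The level sets are $P(0)=\min P$ and $P(k+1)=\min\big(P\setminus\bigcup_{i=0}^k P(i)\big)$. Write $P(k\to\ell)=\bigcup_{i=k}^{\ell}P(i)$ and identify subsets with induced subposets. For $A,B\subseteq P$, $A<B$ means $a<b$ for all $a\in A,b\in B$. A retraction of $P$ is an idempotent order-preserving map $r:P\to P$; its image is a retract. A 6-crown is $x_0<y_0>x_1<y_1>x_2<y_2>x_0$ with no other comparabilities. Type $3C$: three disjoint 2-element chains, no further comparabilities. A 4-crown stack is a poset $Q$ of height $\ge1$ all of whose consecutive level pairs $Q(i)\cup Q(i+1)$ are isomorphic to the ordinal sum of two 2-element antichains (an ordinal sum of 2-element antichains). A section of width three is a poset $P$ of height $h_P\ge1$ with carrier $\{c_{k,j}: k\in[0,h_P], j\in\{0,1,2\}\}$ such that: $c_{0,j}<\dots<c_{h_P,j}$ for each $j$; each $\{c_{k,0},c_{k,1},c_{k,2}\}$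 is an antichain; $c_{k,i}<c_{\ell,j}\Rightarrow c_{k,i+1}<c_{\ell,j+1}$ (indices mod 3); and no $P(k)\cup P(k+1)$ is the ordinal sum of two 3-antichains. It is nice if for all $x<y$: $\{z:z>x\}\not\subseteq\{z:z\ge y\}$ and $\{z:z<y\}\not\subseteq\{z:z\le x\}$. $\mathfrak N_2$ is the class of nice sections of width three with height $\ge2$ and horizon 2, i.e. $P(k)<P(\ell)$ whenever $\ell\ge k+2$, with 2 the smallest such integer. For $P\in\mathfrak N_2$, a retractive up-split is a quadruple $(k,U,s,t)$ with $k\in[0,h_P-1]$, $U\subset P(0\to k)$, $s:P(0\to k)\setminus U\to S$ a retraction and $t:P(k+1\to h_P)\to T$ a retraction, where $S,T$ are each a 2-element antichain or a 4-crown stack. $S(\cdot)$ and $T(\cdot)$ denote the level sets of $S$ and $T$. *)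

(* Defs.v *)
(* A finite poset is a finType T with a relation le : rel T
   satisfying the partial order axioms; subsets (induced subposets) are {set T}. *)
From mathcomp Require Import all_boot.
Set Implicit Arguments. Unset Strict Implicit. Unset Printing Implicit Defensive.

Section Posets.
Variables (T : finType) (le : rel T).

Definition is_poset : Prop :=
  reflexive le /\ antisymmetric le /\ transitive le.

Definition lt : rel T := fun x y => (x != y) && le x y.

Definition setlt (A B : {set T}) : Prop :=
  forall a b, a \in A -> b \in B -> lt a b.

Definition antichain (A : {set T}) : Prop :=
  forall a b, a \in A -> b \in A -> a != b -> ~~ le a b.

Definition mins (A : {set T}) : {set T} :=
  [set x in A | [forall y in A, ~~ lt y x]].

(* levels of the induced subposet D:
   lev_upto D k = D(0) u ... u D(k-1),  level D k = D(k) *)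
Fixpoint lev_upto (D : {set T}) (k : nat) : {set T} :=
  match k with
  | 0 => set0
  | k'.+1 => lev_upto D k' :|: mins (D :\: lev_upto D k')
  end.

Definition level (D : {set T}) (k : nat) : {set T} := mins (D :\: lev_upto D k).

Definition levels (D : {set T}) (k l : nat) : {set T} :=
  \bigcup_(k <= i < l.+1) level D i.

(* height of the induced subposet D: maximal length (number of steps) of a
   strict chain in D *)
Definition chain_in (D : {set T}) (s : seq T) : bool :=
  all (fun x => x \in D) s && sorted lt s.

Definition has_chain_of_length (D : {set T}) (n : nat) : bool :=
  [exists s : n.+1.-tuple T, chain_in D s].

Definition height_in (D : {set T}) : nat :=
  \max_(n < #|T|.+1 | has_chain_of_length D n) n.

Definition ordsum_antichains (n : nat) (A : {set T}) : Prop :=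
  exists B C : {set T},
    [/\ A = B :|: C, [disjoint B & C], #|B| = n & #|C| = n] /\
    [/\ antichain B, antichain C & setlt B C].

Definition two_antichain (D : {set T}) : Prop := #|D| = 2 /\ antichain D.

Definition crown4_stack (D : {set T}) : Prop :=
  1 <= height_in D /\
  forall i, i < height_in D -> ordsum_antichains 2 (level D i :|: level D i.+1).

Definition retraction_on (D : {set T}) (f : T -> T) : Prop :=
  [/\ forall x, x \in D -> f x \in D,
      forall x y, x \in D -> y \in D -> le x y -> le (f x) (f y)
    & forall x, x \in D -> f (f x) = f x].

(* P (= the whole type) is a section of width three *)
Definition section3 : Prop :=
  let h := height_in setT in
  1 <= h /\
  exists c : nat -> nat -> T,
  [/\ forall x, exists k j, [/\ k <= h, j < 3 & x = c k j]
    & forall k i l j, k <= h -> i < 3 -> l <= h -> j < 3 ->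
        c k i = c l j -> k = l /\ i = j] /\
  [/\ forall k j, k < h -> j < 3 -> lt (c k j) (c k.+1 j),
      forall k i j, k <= h -> i < 3 -> j < 3 -> i != j -> ~~ le (c k i) (c k j),
      forall k i l j, k <= h -> i < 3 -> l <= h -> j < 3 ->
        lt (c k i) (c l j) -> lt (c k ((i.+1) %% 3)) (c l ((j.+1) %% 3))
    & forall k, ~ ordsum_antichains 3 (level setT k :|: level setT k.+1)].

Definition nice : Prop :=
  forall x y, lt x y ->
    ~~ ([set z | lt x z] \subset [set z | le y z]) /\
    ~~ ([set z | lt z y] \subset [set z | le z x]).

Definition horizon_at_most (m : nat) : Prop :=
  forall k l, k + m <= l -> setlt (level setT k) (level setT l).

Definition in_N2 : Prop :=
  [/\ section3, nice, 2 <= height_in setT,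
      horizon_at_most 2 & ~ horizon_at_most 1].

Definition retractive_up_split (k : nat) (U : {set T}) (s t : T -> T) : Prop :=
  let h := height_in setT in
  let D1 := levels setT 0 k :\: U in
  let D2 := levels setT k.+1 h in
  [/\ k <= h - 1, U \subset levels setT 0 k,
      retraction_on D1 s & retraction_on D2 t] /\
  [/\ two_antichain (s @: D1) \/ crown4_stack (s @: D1)
    & two_antichain (t @: D2) \/ crown4_stack (t @: D2)].

End Posets.

(* Main.v *)
Require Import Defs.
From mathcomp Require Import all_boot.
Set Implicit Arguments. Unset Strict Implicit. Unset Printing Implicit Defensive.

Lemma ltW (T : finType) (le : rel T) x y : lt le x y -> le x y.
Proof. by case/andP. Qed.

Lemma lt_irr (T : finType) (le : rel T) x : ~~ lt le x x.
Proof. by rewrite /lt eqxx. Qed.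

Lemma lt_le_trans (T : finType) (le : rel T) : is_poset le ->
  forall x y z, lt le x y -> le y z -> lt le x z.
Proof.
move=> [Hr [Ha Ht]] x y z /andP [Hxy Lxy] Lyz.
apply/andP; split; last exact: Ht Lxy Lyz.
apply/eqP => Exz; subst z.
by move/eqP: Hxy; apply; apply: Ha; rewrite Lxy Lyz.
Qed.

Lemma le_lt_trans (T : finType) (le : rel T) : is_poset le ->
  forall x y z, le x y -> lt le y z -> lt le x z.
Proof.
move=> [Hr [Ha Ht]] x y z Lxy /andP [Hyz Lyz].
apply/andP; split; last exact: Ht Lxy Lyz.
apply/eqP => Exz; subst z.
by move/eqP: Hyz; apply; apply: Ha; rewrite Lxy Lyz.
Qed.

Lemma lt_trans (T : finType) (le : rel T) : is_poset le -> transitive (lt le).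
Proof. move=> Hp y x z Hxy Hyz; exact: lt_le_trans Hp _ _ _ Hxy (ltW Hyz). Qed.

Lemma mins_sub (T : finType) (le : rel T) A : mins le A \subset A.
Proof. by apply/subsetP => x; rewrite inE => /andP []. Qed.

Lemma minsP (T : finType) (le : rel T) A x :
  x \in mins le A -> x \in A /\ forall y, y \in A -> ~~ lt le y x.
Proof.
rewrite inE => /andP [xA /forallP H]; split => // y yA.
by move: (H y); rewrite yA.
Qed.

Lemma mins_exists (T : finType) (le : rel T) : is_poset le ->
  forall (A : {set T}) x, x \in A -> exists2 m, m \in mins le A & le m x.
Proof.
move=> Hp A.
have [Hr _] := Hp.
suff H : forall n x, #|[set z in A | lt le z x]| <= n -> x \in A ->
  exists2 m, m \in mins le A & le m x.
  by move=> x; apply: (H _ x (leqnn _)).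
elim=> [|n IH] x Hn xA.
- exists x => //; rewrite inE xA /=; apply/forallP => y; apply/implyP => yA.
  apply/negP => Hy; move: Hn; rewrite leqn0 => /eqP/cards0_eq/setP/(_ y).
  by rewrite !inE yA Hy.
- case: (boolP [exists y, (y \in A) && lt le y x]).
  + case/existsP => y /andP [yA Hyx].
    have [|m Hm Lmy] := IH y _ yA.
      rewrite -ltnS; apply: leq_trans Hn; apply: proper_card.
      apply/properP; split.
        apply/subsetP => z; rewrite !inE => /andP [-> /=] Hz.
        exact: lt_trans Hp _ _ _ Hz Hyx.
      by exists y; rewrite !inE ?yA ?Hyx ?lt_irr.
    exists m => //; have [_ [_ Ht]] := Hp; exact: Ht (ltW Hyx).
  + move=> Hn'; exists x => //; rewrite inE xA /=; apply/forallP => y.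
    apply/implyP => yA; apply/negP => Hy; move/negP: Hn'; apply.
    by apply/existsP; exists y; rewrite yA.
Qed.

Lemma lev_upto_sub (T : finType) (le : rel T) (D : {set T}) n :
  lev_upto le D n \subset D.
Proof.
elim: n => [|n IH] /=; first exact: sub0set.
rewrite subUset IH /=; apply: subset_trans (mins_sub _ _) _; exact: subsetDl.
Qed.

Lemma lev_upto_mono (T : finType) (le : rel T) (D : {set T}) m n :
  m <= n -> lev_upto le D m \subset lev_upto le D n.
Proof.
elim: n => [|n IH]; first by rewrite leqn0 => /eqP ->.
rewrite leq_eqVlt => /orP [/eqP -> //|Hmn].
apply: subset_trans (IH Hmn) _ => /=; exact: subsetUl.
Qed.

Lemma level_in (T : finType) (le : rel T) (D : {set T}) n x :
  x \in level le D n -> [/\ x \in D, x \notin lev_upto le D n & x \in lev_upto le D n.+1].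
Proof.
move=> H; have := minsP H => [[]]; rewrite inE => /andP [H1 H2] _.
by split => //=; rewrite inE H orbT.
Qed.

Lemma level_uniq (T : finType) (le : rel T) (D : {set T}) i j x :
  x \in level le D i -> x \in level le D j -> i = j.
Proof.
move=> Hi Hj; have [_ ni ii] := level_in Hi; have [_ nj ij] := level_in Hj.
case: (ltngtP i j) => // Hij.
- by rewrite (subsetP (lev_upto_mono le D Hij) _ ii) in nj.
- by rewrite (subsetP (lev_upto_mono le D Hij) _ ij) in ni.
Qed.

Lemma level_lt (T : finType) (le : rel T) (D : {set T}) i j x y :
  x \in level le D i -> y \in level le D j -> lt le x y -> i < j.
Proof.
move=> Hx Hy Hxy; rewrite ltnNge; apply/negP => Hji.
have [xD nx _] := level_in Hx.
have [_ Hm] := minsP Hy.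
have : x \in D :\: lev_upto le D j.
  rewrite inE xD andbT; apply/negP => H.
  by rewrite (subsetP (lev_upto_mono le D Hji) _ H) in nx.
by move/Hm; rewrite Hxy.
Qed.

Lemma level_antichain (T : finType) (le : rel T) (D : {set T}) i x y :
  x \in level le D i -> y \in level le D i -> x != y -> ~~ le x y.
Proof.
move=> Hx Hy nxy; apply/negP => Lxy.
by have := level_lt Hx Hy; rewrite /lt nxy Lxy ltnn => /(_ isT).
Qed.

Lemma level_exists (T : finType) (le : rel T) : is_poset le ->
  forall (D : {set T}) x, x \in D -> exists i, x \in level le D i.
Proof.
move=> Hp D x xD.
have Hc : forall n, D \subset lev_upto le D n \/ n <= #|lev_upto le D n|.
  elim=> [|n [IH|IH]]; [by right| left; apply: subset_trans IH (lev_upto_mono _ _ _) |].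
    exact: leqnSn.
  case: (boolP (D \subset lev_upto le D n)) => HD; first by left; apply: subset_trans HD (lev_upto_mono _ _ (leqnSn _)).
  right; have [y yD yn] : exists2 y, y \in D & y \notin lev_upto le D n.
    move/subsetPn: HD => [y ? ?]; by exists y.
  have [|m Hm _] := @mins_exists _ _ Hp (D :\: lev_upto le D n) y.
    by rewrite inE yn.
  have [_ Hmn _] := level_in Hm.
  rewrite /=; apply: leq_trans (_ : #|lev_upto le D n|.+1 <= _); first by [].
  have := cardsU1 m (lev_upto le D n); rewrite Hmn add1n => <-; apply: subset_leq_card.
  by apply/subsetP => z; rewrite in_setU1 in_setU => /orP [/eqP ->|->]; rewrite ?Hm ?orbT.
have HxD : x \in lev_upto le D #|T|.+1.
  case: (Hc #|T|.+1) => [/subsetP -> //|].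
  by rewrite ltnNge max_card.
move: HxD; elim: #|T|.+1 => [|n IH] //=; first by rewrite inE.
by rewrite inE => /orP [/IH //|H]; exists n.
Qed.

Lemma level_chain (T : finType) (le : rel T) : is_poset le ->
  forall (D : {set T}) n y, y \in level le D n -> exists l : seq T,
    [/\ size l = n, all (mem D) (y :: l) & path (fun a b => lt le b a) y l].
Proof.
move=> Hp D; elim=> [|n IH] y Hy.
  by exists [::]; have [yD _ _] := level_in Hy; rewrite /= yD.
have [yD yn _] := level_in Hy.
have yn' : y \notin lev_upto le D n.
  by apply: contra yn; apply: (subsetP (lev_upto_mono le D (leqnSn n))).
have ynl : y \notin level le D n.
  apply: contra yn => H; have [_ _ ->] := level_in H; by [].
have [z zA Hzy] : exists2 z, z \in D :\: lev_upto le D n & lt le z y.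
  move: ynl; rewrite /level inE inE yn' yD /= => /forallPn [z].
  by rewrite negb_imply negbK => /andP [? ?]; exists z.
have [m Hm Lmz] := @mins_exists _ _ Hp _ _ zA.
have [l [Hs Ha Hpa]] := IH m Hm.
exists (m :: l); split => /=; first by rewrite Hs.
  by move: Ha => /= ->; rewrite yD.
rewrite Hpa andbT; exact: le_lt_trans Hp _ _ _ Lmz Hzy.
Qed.

Lemma level_height (T : finType) (le : rel T) : is_poset le ->
  forall (D : {set T}) n y, y \in level le D n -> n <= height_in le D.
Proof.
move=> Hp D n y Hy.
have [l [Hs Ha Hpa]] := level_chain Hp Hy.
have Hsz : size (rev (y :: l)) == n.+1 by rewrite size_rev /= Hs.
have Hc : chain_in le D (Tuple Hsz).
  rewrite /chain_in /= all_rev Ha /=.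
  by rewrite (rev_sorted (fun a b => lt le a b)).
have Hu : uniq (rev (y :: l)).
  apply: (sorted_uniq (lt_trans Hp) (fun x => negbTE (@lt_irr _ le x))).
  by rewrite (rev_sorted (fun a b => lt le a b)).
have Hn : n < #|T|.+1.
  rewrite ltnS; apply: leq_trans (_ : size (rev (y :: l)) <= _).
    by rewrite size_rev /= Hs.
  by rewrite -(card_uniqP Hu) max_card.
have := @leq_bigmax_cond _ (fun i : 'I_#|T|.+1 => has_chain_of_length le D i)
   (fun i => nat_of_ord i) (Ordinal Hn).
rewrite /height_in; apply.
by apply/existsP; exists (Tuple Hsz).
Qed.

Lemma level_cover (T : finType) (le : rel T) : is_poset le ->
  forall (D : {set T}) x, x \in D -> exists2 i, i <= height_in le D & x \in level le D i.
Proof.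
move=> Hp D x xD; have [i Hi] := level_exists Hp xD.
by exists i => //; exact: (@level_height _ _ Hp _ _ _ Hi).
Qed.

Lemma card2_ex (T : finType) (A : {set T}) : #|A| = 2 -> exists x, x \in A.
Proof. by move=> H; apply/card_gt0P; rewrite H. Qed.

Lemma ordsum_levels (T : finType) (le : rel T) : is_poset le ->
  forall (D : {set T}) i, ordsum_antichains le 2 (level le D i :|: level le D i.+1) ->
  [/\ setlt le (level le D i) (level le D i.+1), #|level le D i| = 2 & #|level le D i.+1| = 2].
Proof.
move=> Hp D i [B [C [[EU Hdj cardB cardC] [_ _ Hlt]]]].
have HBC : forall b c, b \in B -> c \in C -> b \in level le D i /\ c \in level le D i.+1.
  move=> b c bB cC.
  have : b \in B :|: C by rewrite inE bB.
  have : c \in B :|: C by rewrite inE cC orbT.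
  rewrite -EU !in_setU => /orP [ci|ci] /orP [bi|bi].
  - by have := level_lt bi ci (Hlt _ _ bB cC); rewrite ?ltnn // => /ltnW; rewrite ltnn.
  - by have := level_lt bi ci (Hlt _ _ bB cC); rewrite ?ltnn // => /ltnW; rewrite ltnn.
  - by [].
  - by have := level_lt bi ci (Hlt _ _ bB cC); rewrite ?ltnn // => /ltnW; rewrite ltnn.
have [b0 b0B] := card2_ex cardB.
have [c0 c0C] := card2_ex cardC.
have EB : level le D i = B.
  apply/setP => x; apply/idP/idP => Hx.
  - have : x \in B :|: C by rewrite -EU inE Hx.
    rewrite inE => /orP [//|xC].
    have [_ H] := HBC _ _ b0B xC.
    by have := level_uniq Hx H => /eqP; rewrite eqn_leq ltnn ?andbF.
  - by have [] := HBC _ _ Hx c0C.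
have EC : level le D i.+1 = C.
  apply/setP => x; apply/idP/idP => Hx.
  - have : x \in B :|: C by rewrite -EU inE Hx orbT.
    rewrite inE => /orP [xB|//].
    have [H _] := HBC _ _ xB c0C.
    by have := level_uniq Hx H => /eqP; rewrite eqn_leq ltnn ?andbF.
  - by have [] := HBC _ _ b0B Hx.
by rewrite EB EC.
Qed.

Lemma antichain_height (T : finType) (le : rel T) (D : {set T}) :
  antichain le D -> height_in le D = 0.
Proof.
move=> HA; apply/eqP; rewrite -leqn0; apply/bigmax_leqP => n.
case/existsP => [[s Hsz]] /andP [/= Ha Hs].
case: s Hsz Ha Hs => [|a [|b l]] //=.
  by move=> /eqP [] ->.
move=> _ /and3P [aD bD _] /andP [/andP [nab Lab] _].
by move: (HA a b aD bD nab); rewrite Lab.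
Qed.

Lemma antichain_mins (T : finType) (le : rel T) (D : {set T}) :
  antichain le D -> mins le D = D.
Proof.
move=> HA; apply/setP => x; rewrite inE; apply/andP/idP => [[]//|xD].
split => //; apply/forallP => y; apply/implyP => yD.
apply/negP => /andP [nyx Lyx].
by move: (HA y x yD xD nyx); rewrite Lyx.
Qed.

Lemma struct (T : finType) (le : rel T) : is_poset le ->
  forall D : {set T}, two_antichain le D \/ crown4_stack le D ->
  [/\ #|level le D 0| = 2,
      forall i j, i < j -> j <= height_in le D -> setlt le (level le D i) (level le D j)
    & exists x, x \in level le D (height_in le D)].
Proof.
move=> Hp D [[c2 HA]|[H1 Hc]].
  have E0 : level le D 0 = D by rewrite /level /= setD0 antichain_mins.
  rewrite antichain_height // E0; split => //.
    by move=> i j Hij; rewrite leqn0 => /eqP Ej; rewrite Ej in Hij.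
  exact: card2_ex.
have Ho : forall i, i < height_in le D -> [/\ setlt le (level le D i) (level le D i.+1),
   #|level le D i| = 2 & #|level le D i.+1| = 2].
  by move=> i Hi; apply: ordsum_levels Hp _ _ (Hc i Hi).
split.
- by have [] := Ho 0 H1.
- move=> i; elim=> [//|j IH] Hij Hj.
  have [Hl c1 c2] := Ho j Hj.
  rewrite ltnS leq_eqVlt in Hij; case/orP: Hij => [/eqP Eij|Hij].
    by subst i.
  move=> a c Ha Hc'.
  have [b Hb] := card2_ex c1.
  apply: lt_trans Hp _ _ _ (IH Hij (ltnW Hj) _ _ Ha Hb) (Hl _ _ Hb Hc').
- have Hh : (height_in le D).-1 < height_in le D by rewrite prednK.
  have [_ _ c2] := Ho _ Hh.
  rewrite prednK // in c2.
  exact: card2_ex c2.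
Qed.

Lemma good_top (T : finType) (le : rel T) : is_poset le ->
  forall D : {set T}, two_antichain le D \/ crown4_stack le D ->
  forall x, x \in D -> exists2 a, a \in level le D (height_in le D) & le x a.
Proof.
move=> Hp D HD x xD; have [_ Hlt [a Ha]] := struct Hp HD.
have [i Hi Hx] := level_cover Hp xD.
rewrite leq_eqVlt in Hi; case/orP: Hi => [/eqP Ei|Hi].
  by exists x; [rewrite -Ei | have [Hr _] := Hp; exact: Hr].
by exists a => //; apply: ltW; exact: Hlt _ _ Hi (leqnn _) _ _ Hx Ha.
Qed.

Lemma good_bot_lt (T : finType) (le : rel T) : is_poset le ->
  forall D : {set T}, two_antichain le D \/ crown4_stack le D ->
  forall y b, y \in D -> y \notin level le D 0 -> b \in level le D 0 -> lt le b y.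
Proof.
move=> Hp D HD y b yD yn Hb; have [_ Hlt _] := struct Hp HD.
have [i Hi Hy] := level_cover Hp yD.
case: i Hi Hy => [|i] Hi Hy; first by rewrite Hy in yn.
exact: Hlt 0 i.+1 isT Hi _ _ Hb Hy.
Qed.

Lemma good_bot (T : finType) (le : rel T) : is_poset le ->
  forall D : {set T}, two_antichain le D \/ crown4_stack le D ->
  forall y, y \in D -> exists2 b, b \in level le D 0 & le b y.
Proof.
move=> Hp D HD y yD; have [c2 _ _] := struct Hp HD.
case: (boolP (y \in level le D 0)) => Hy.
  by exists y => //; have [Hr _] := Hp; exact: Hr.
have [b Hb] := card2_ex c2.
by exists b => //; apply: ltW; exact: (@good_bot_lt _ _ Hp _ HD _ _ yD Hy Hb).
Qed.

Lemma setlt_full (T : finType) (le : rel T) : is_poset le ->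
  forall S U : {set T}, two_antichain le S \/ crown4_stack le S ->
  two_antichain le U \/ crown4_stack le U ->
  setlt le (level le S (height_in le S)) (level le U 0) -> setlt le S U.
Proof.
move=> Hp S U HS HU H x y xS yU.
have [a Ha Lxa] := good_top Hp HS xS.
have [b Hb Lby] := good_bot Hp HU yU.
exact: (le_lt_trans Hp Lxa (lt_le_trans Hp (H _ _ Ha Hb) Lby)).
Qed.

Lemma card2_other (T : finType) (A : {set T}) x : #|A| = 2 -> exists2 v, v \in A & v != x.
Proof.
move=> c2; have : 0 < #|A :\ x|.
  move: (cardsD1 x A); rewrite c2; case: (x \in A); by case: #|A :\ x|.
case/card_gt0P => v; rewrite !inE => /andP [? ?]; by exists v.
Qed.

Lemma card2_elems (T : finType) (A : {set T}) v w z : #|A| = 2 -> v \in A -> w \in A ->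
  v != w -> z \in A -> z = v \/ z = w.
Proof.
move=> c2 vA wA nvw zA.
have Hs : [set v; w] \subset A by apply/subsetP => a; rewrite !inE => /orP [] /eqP ->.
have : [set v; w] == A by rewrite eqEcard Hs cards2 nvw c2.
by move/eqP => EA; move: zA; rewrite -EA !inE => /orP [] /eqP; [left|right].
Qed.

Lemma bigcup_seqP (T : finType) (r : seq nat) (F : nat -> {set T}) x :
  reflect (exists2 i, i \in r & x \in F i) (x \in \bigcup_(i <- r) F i).
Proof.
elim: r => [|a r IH]; first by rewrite big_nil inE; constructor => [[]].
rewrite big_cons inE; apply: (iffP orP) => [[H|/IH [i Hi Hx]]|[i]].
- by exists a; rewrite ?inE ?eqxx.
- by exists i; rewrite ?inE ?Hi ?orbT.
- rewrite inE => /orP [/eqP ->|Hi] Hx; [by left| by right; apply/IH; exists i].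
Qed.

Lemma levelsP (T : finType) (le : rel T) (D : {set T}) a b x :
  reflect (exists2 i, a <= i <= b & x \in level le D i) (x \in levels le D a b).
Proof.
apply: (iffP (bigcup_seqP _ _ _)) => [[i Hi Hx]|[i Hi Hx]].
  by exists i => //; move: Hi; rewrite mem_index_iota ltnS.
by exists i => //; rewrite mem_index_iota ltnS.
Qed.
Unset Implicit Arguments.

Theorem proposition6p3 (T : finType) (le : rel T) (k : nat) (U : {set T})
  (s t : T -> T) :
  is_poset le -> in_N2 le -> retractive_up_split le k U s t ->
  let h := height_in le setT in
  let D1 := levels le setT 0 k :\: U in
  let D2 := levels le setT k.+1 h in
  let S := s @: D1 in
  let Tt := t @: D2 in
  (exists r : T -> T,
     [/\ retraction_on le setT r, r @: setT = S :|: Tt & setlt le S Tt] /\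
     [/\ forall x, x \in D1 -> r x = s x,
         forall x, x \in U -> r x \in Tt
       & forall x, x \in D2 -> r x = t x])
  <->
  (setlt le (level le S (height_in le S)) (level le Tt 0) /\
   forall u, u \in U -> exists2 v, v \in level le Tt 0 &
     forall p, p \in D2 -> t p = v -> ~~ lt le u p).
Proof.
move=> Hp [Hsec Hnice H2h Hhor Hnhor] [[Hk HU Hs Ht] [HSs HTt]] h D1 D2 S Tt.
have HS : two_antichain le S \/ crown4_stack le S := HSs.
have HT : two_antichain le Tt \/ crown4_stack le Tt := HTt.
have [Hs1 Hs2 Hs3] : retraction_on le D1 s := Hs.
have [Ht1 Ht2 Ht3] : retraction_on le D2 t := Ht.
have HU' : U \subset levels le setT 0 k := HU.
have [Hr [Ha Htr]] := Hp.
have [cT0 _ _] := struct Hp HT.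
split.
- move=> [r [[Hret Himg SlT] [rD1 rU rD2]]].
  have [_ Hrm _] := Hret.
  split.
    move=> a b Ha' Hb'; apply: SlT.
      by have [] := level_in Ha'.
    by have [] := level_in Hb'.
  move=> u uU; have [v Hv nv] := card2_other (r u) cT0.
  exists v => // p pD2 Etp; apply/negP => Hup.
  have := Hrm u p (in_setT _) (in_setT _) (ltW Hup); rewrite (rD2 p pD2) Etp => Luv.
  have [_ Hmin] := minsP Hv.
  have : r u \in Tt :\: lev_upto le Tt 0 by rewrite /= setD0 rU.
  by move/Hmin; rewrite /lt eq_sym nv Luv.
move=> [HA HB].
have SlT : setlt le S Tt := setlt_full Hp HS HT HA.
have TD2 : forall y, y \in Tt -> y \in D2 by move=> y /imsetP [p pD2 ->]; exact: Ht1.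
have SD1 : forall y, y \in S -> y \in D1 by move=> y /imsetP [p pD1 ->]; exact: Hs1.
have T0T : forall y, y \in level le Tt 0 -> y \in Tt by move=> y /level_in [].
have cov : forall x, exists2 i, i <= h & x \in level le setT i.
  by move=> x; apply: (level_cover Hp (in_setT x)).
have lvD2 : forall x, x \in D2 -> exists2 i, k < i & x \in level le setT i.
  by move=> x /levelsP [i /andP [Hi _] Hx]; exists i.
have lvlow : forall x, x \in levels le setT 0 k -> exists2 i, i <= k & x \in level le setT i.
  by move=> x /levelsP [i /andP [_ Hi] Hx]; exists i.
have D2low : forall x, x \in D2 -> x \notin levels le setT 0 k.
  move=> x /lvD2 [i Hi Hx]; apply/negP => /lvlow [j Hj Hx'].
  have := level_uniq Hx Hx' => Eij; subst j.
  by move: (leq_ltn_trans Hj Hi); rewrite ltnn.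
have D2D1 : forall x, x \in D2 -> x \notin D1.
  by move=> x /D2low Hx; rewrite inE (negbTE Hx) andbF.
have D2U : forall x, x \in D2 -> x \notin U.
  by move=> x /D2low Hx; apply: contra Hx; apply: (subsetP HU').
have part : forall x, x \notin D1 -> x \notin U -> x \in D2.
  move=> x nD1 nU; have [i Hi Hx] := cov x.
  case: (leqP i k) => Hik.
    have : x \in levels le setT 0 k by apply/levelsP; exists i.
    by move=> H; move: nD1; rewrite inE nU H.
  by apply/levelsP; exists i => //; rewrite Hik.
have UL : forall u, u \in U -> u \in level le setT k.
  move=> u uU; have [i Hi Hu] := lvlow u (subsetP HU' u uU).
  have [v Hv nv] := HB u uU.
  have [p pD2 Ev] : exists2 p, p \in D2 & v = t p.
    by apply/imsetP; apply: T0T.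
  have [j Hj Hp'] := lvD2 p pD2.
  case: (ltngtP i k) Hi => // Hik _; last by rewrite -Hik.
  have := Hhor i j; rewrite addn2 => /(_ (leq_ltn_trans Hik Hj)) => Hl.
  by move: (nv p pD2 (esym Ev)); rewrite (Hl u p Hu Hp').
pose good u v := [forall p, (p \in D2) ==> (t p == v) ==> ~~ lt le u p].
pose wf u := odflt u [pick w in level le Tt 0 |
   [exists v in level le Tt 0, (v != w) && good u v]].
have Hwf : forall u, u \in U -> exists v, [/\ wf u \in level le Tt 0,
   v \in level le Tt 0, v != wf u & forall p, p \in D2 -> t p = v -> ~~ lt le u p].
  move=> u uU; have [v Hv Hg] := HB u uU.
  have [w Hw nwv] := card2_other v cT0.
  rewrite /wf; case: pickP => [w' /andP [Hw' H2]|H].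
    case/exists_inP: H2 => v' Hv' /andP [nvw /forallP Hg'].
    exists v'; split => // p pD2 Ep; move: (Hg' p); rewrite pD2 Ep eqxx; exact.
  exfalso; move: (H w); rewrite Hw /= => /negbT/exists_inP; apply; exists v => //.
  rewrite eq_sym nwv /=; apply/forallP => p; apply/implyP => pD2; apply/implyP => /eqP Ep.
  exact: Hg.
have key : forall x y, x \in U -> y \in D2 -> lt le x y -> le (wf x) (t y).
  move=> x y xU yD2 Hxy; have [v [Hw Hv nvw Hg]] := Hwf x xU.
  have nty : t y != v by apply/eqP => E; move: (Hg y yD2 E); rewrite Hxy.
  have tyT : t y \in Tt by apply: imset_f.
  case: (boolP (t y \in level le Tt 0)) => Hty.
    have [E|E] := card2_elems cT0 Hv Hw nvw Hty; first by rewrite E eqxx in nty.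
    by rewrite E.
  exact: ltW (good_bot_lt Hp HT tyT Hty Hw).
pose r x := if x \in D1 then s x else if x \in U then wf x else t x.
have D1low : forall x, x \in D1 -> x \in levels le setT 0 k by move=> x; rewrite inE => /andP [].
have D1U : forall x, x \in U -> x \notin D1 by move=> x xU; rewrite inE xU.
have noback : forall x y, lt le x y -> x \in D2 -> y \in levels le setT 0 k -> False.
  move=> x y Hxy /lvD2 [i Hi Hx] /lvlow [j Hj Hy].
  have := level_lt Hx Hy Hxy => Hij.
  by move: (leq_trans (ltn_trans Hi Hij) Hj); rewrite ltnn.
have noU : forall x y, lt le x y -> x \in U -> y \in levels le setT 0 k -> False.
  move=> x y Hxy /UL Hx /lvlow [j Hj Hy].
  have := level_lt Hx Hy Hxy => Hij.
  by move: (leq_trans Hij Hj); rewrite ltnn.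
have rD1 : forall x, x \in D1 -> r x = s x by move=> x xD1; rewrite /r xD1.
have rU : forall x, x \in U -> r x = wf x by move=> x xU; rewrite /r (negbTE (D1U x xU)) xU.
have rD2 : forall x, x \in D2 -> r x = t x.
  by move=> x xD2; rewrite /r (negbTE (D2D1 x xD2)) (negbTE (D2U x xD2)).
have wfT : forall x, x \in U -> wf x \in Tt.
  by move=> x xU; have [v [Hw _ _ _]] := Hwf x xU; exact: T0T.
have cases : forall x, [\/ x \in D1, x \in U | x \in D2].
  move=> x; case: (boolP (x \in D1)) => H1; first by constructor 1.
  case: (boolP (x \in U)) => H2; first by constructor 2.
  by constructor 3; exact: part.
exists r; split; split.
- split.
  + by move=> x _; rewrite in_setT.
  + move=> x y _ _ Lxy.
    case: (eqVneq x y) => [<-|nxy]; first exact: Hr.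
    have Hxy : lt le x y by rewrite /lt nxy Lxy.
    case: (cases x) => Hx; case: (cases y) => Hy.
    * by rewrite !rD1 //; exact: Hs2.
    * by rewrite rD1 // rU //; apply: ltW; apply: SlT; [exact: imset_f| exact: wfT].
    * by rewrite rD1 // rD2 //; apply: ltW; apply: SlT; exact: imset_f.
    * by case: (noU _ _ Hxy Hx (D1low _ Hy)).
    * by case: (noU _ _ Hxy Hx (subsetP HU' _ Hy)).
    * by rewrite rU // rD2 //; exact: key.
    * by case: (noback _ _ Hxy Hx (D1low _ Hy)).
    * by case: (noback _ _ Hxy Hx (subsetP HU' _ Hy)).
    * by rewrite !rD2 //; exact: Ht2.
  + move=> x _; case: (cases x) => Hx.
    * by rewrite (rD1 x Hx) (rD1 _ (Hs1 x Hx)) Hs3.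
    * rewrite (rU x Hx) (rD2 _ (TD2 _ (wfT x Hx))).
      by have /imsetP [p pD2 ->] := wfT x Hx; rewrite Ht3.
    * by rewrite (rD2 x Hx) (rD2 _ (Ht1 x Hx)) Ht3.
- apply/setP => y; apply/imsetP/idP.
  + move=> [x _ ->]; case: (cases x) => Hx.
    * by rewrite rD1 // inE imset_f.
    * by rewrite rU // inE wfT ?orbT.
    * by rewrite rD2 // inE imset_f ?orbT.
  + rewrite inE => /orP [/imsetP [x Hx ->]|/imsetP [x Hx ->]].
    * by exists x; rewrite ?in_setT ?rD1.
    * by exists x; rewrite ?in_setT ?rD2.
- exact: SlT.
- exact: rD1.
- by move=> x xU; rewrite rU ?wfT.
- exact: rD2.
Qed.
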